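(* Let $k\ge 2$ and $\ell\ge 2$ be integers. Then $\overline{\alpha}(\{1,k,2k,\dots,\ell k\})=\frac{1}{\ell+1}$.
   Context: For a finite set $S$ of positive integers, the distance graph $G(S)$ has vertex set $\mathbb{Z}$, with $i,j$ adjacent iff $|i-j|\in S$. The density of $A\subseteq\mathbb{Z}$ is $\delta(A)=\limsup_{N\to\infty}\frac{|A\cap[-N,N]|}{2N+1}$, and the independence ratio $\overline{\alpha}(S)$ is the supremum of $\delta(A)$ over independent sets $A$ of $G(S)$. *)

(* Defs.v *)
From Stdlib Require Import Reals ZArith List Classical ClassicalEpsilon.
From Coquelicot Require Import Coquelicot.
Open Scope R_scope.

(* Distance graph G(S) on Z: i ~ j iff |i - j| \in S (S a finite list of
   positive integers).  A set A of integers is independent iff no two of its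
   elements are adjacent. *)
Definition independent (S : list Z) (A : Z -> Prop) : Prop :=
  forall i j : Z, A i -> A j -> ~ In (Z.abs (i - j)) S.

(* |A \cap [-N, N]|, computed with a classical indicator. *)
Definition ind (A : Z -> Prop) (z : Z) : nat :=
  if excluded_middle_informative (A z) then 1%nat else 0%nat.

Definition count_window (A : Z -> Prop) (N : nat) : nat :=
  fold_right Nat.add 0%nat
    (map (fun i : nat => ind A (Z.of_nat i - Z.of_nat N)%Z) (seq 0 (2 * N + 1))).

Definition density (A : Z -> Prop) : Rbar :=
  LimSup_seq (fun N : nat => INR (count_window A N) / INR (2 * N + 1)).

Definition indep_ratio (S : list Z) : Rbar :=
  Lub_Rbar (fun x : R => exists A : Z -> Prop, independent S A /\ density A = Finite x).

Definition dist_set (k l : nat) : list Z :=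
  1%Z :: map (fun i : nat => (Z.of_nat k * Z.of_nat i)%Z) (seq 1 l).

(* Main.v *)
From Pilot Require Import Defs.
From Stdlib Require Import Reals ZArith List Lia Lra Classical ClassicalEpsilon.
From Coquelicot Require Import Coquelicot.
Open Scope R_scope.
Notation ind := Pilot.Defs.ind.

Fixpoint sumn (f : nat -> nat) (n : nat) : nat :=
  match n with O => O | S n => (sumn f n + f n)%nat end.

Lemma sumn_ext f g n : (forall i, (i < n)%nat -> f i = g i) -> sumn f n = sumn g n.
Proof. induction n; simpl; intros H; auto. rewrite IHn, H; auto. Qed.

Lemma sumn_mono f g n : (forall i, (i < n)%nat -> (f i <= g i)%nat) -> (sumn f n <= sumn g n)%nat.
Proof. induction n; simpl; intros H; auto. specialize (IHn (fun i Hi => H i ltac:(lia))).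
  specialize (H n ltac:(lia)). lia. Qed.

Lemma sumn_const c n : sumn (fun _ => c) n = (n * c)%nat.
Proof. induction n; simpl; auto. rewrite IHn; lia. Qed.

Lemma sumn_plus f g n : sumn (fun i => f i + g i)%nat n = (sumn f n + sumn g n)%nat.
Proof. induction n; simpl; auto. rewrite IHn; lia. Qed.

Lemma sumn_add f m n : sumn f (m + n) = (sumn f m + sumn (fun i => f (m + i)%nat) n)%nat.
Proof. induction n. rewrite Nat.add_0_r; simpl; lia. rewrite Nat.add_succ_r; simpl. rewrite IHn, Nat.add_assoc. reflexivity. Qed.

Lemma sumn_exch (F : nat -> nat -> nat) M L :
  sumn (fun j => sumn (fun i => F i j) M) L = sumn (fun i => sumn (fun j => F i j) L) M.
Proof. induction L; simpl. { induction M; simpl; lia. } rewrite IHL.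
  rewrite <- sumn_plus. reflexivity. Qed.

Lemma sumn_ge f n j : (j < n)%nat -> (f j <= sumn f n)%nat.
Proof. induction n; simpl; intros H. lia. destruct (Nat.eq_dec j n). subst; lia.
  specialize (IHn ltac:(lia)); lia. Qed.

Lemma ind_le1 A z : (ind A z <= 1)%nat.
Proof. unfold ind; destruct excluded_middle_informative; lia. Qed.

Lemma ind_1 A z : ind A z = 1%nat -> A z.
Proof. unfold ind; destruct excluded_middle_informative; auto; discriminate. Qed.

Lemma ind_0 A z : ~ A z -> ind A z = 0%nat.
Proof. unfold ind; destruct excluded_middle_informative; tauto. Qed.

Lemma ind_A A z : A z -> ind A z = 1%nat.
Proof. unfold ind; destruct excluded_middle_informative; tauto. Qed.

Definition cnt A (a : Z) n := sumn (fun i => ind A (a + Z.of_nat i)%Z) n.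

Lemma cnt_le A a n : (cnt A a n <= n)%nat.
Proof. unfold cnt. rewrite <- (Nat.mul_1_r n) at 2. rewrite <- sumn_const.
  apply sumn_mono; intros; apply ind_le1. Qed.

Lemma cnt_split A a m n : cnt A a (m + n) = (cnt A a m + cnt A (a + Z.of_nat m)%Z n)%nat.
Proof. unfold cnt. rewrite sumn_add. f_equal. apply sumn_ext; intros.
  f_equal. lia. Qed.

Lemma shift1 A a M d : (cnt A a M <= cnt A (a + Z.of_nat d)%Z M + d)%nat.
Proof. pose proof (cnt_split A a M d). pose proof (cnt_split A a d M).
  rewrite Nat.add_comm in H0. pose proof (cnt_le A a d). lia. Qed.

Lemma shift2 A a M d : (cnt A (a + Z.of_nat d)%Z M <= cnt A a M + d)%nat.
Proof. pose proof (cnt_split A a M d). pose proof (cnt_split A a d M).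
  rewrite Nat.add_comm in H0. pose proof (cnt_le A (a + Z.of_nat M)%Z d). lia. Qed.

Lemma exch_cnt A a M L k :
  sumn (fun j => cnt A (a + Z.of_nat (j * k))%Z M) L =
  sumn (fun i => sumn (fun j => ind A ((a + Z.of_nat i) + Z.of_nat (j * k))%Z) L) M.
Proof. unfold cnt. rewrite sumn_exch. apply sumn_ext; intros. apply sumn_ext; intros.
  f_equal. lia. Qed.

Lemma cnt_upper A L k :
  (forall x, (sumn (fun j => ind A (x + Z.of_nat (j * k))%Z) L <= 1)%nat) ->
  forall a M, (L * cnt A a M <= M + L * (L * k))%nat.
Proof. intros H a M.
  assert (H1 : (sumn (fun j => cnt A (a + Z.of_nat (j * k))%Z M) L <= M)%nat).
  { rewrite exch_cnt. rewrite <- (Nat.mul_1_r M) at 2. rewrite <- sumn_const.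
    apply sumn_mono; intros; apply H. }
  assert (H2 : (sumn (fun _ => cnt A a M) L <= sumn (fun j => cnt A (a + Z.of_nat (j * k))%Z M + L * k) L)%nat).
  { apply sumn_mono; intros. pose proof (shift1 A a M (i * k)).
    assert (i * k <= L * k)%nat by nia. lia. }
  rewrite sumn_plus, !sumn_const in H2. lia. Qed.

Lemma cnt_lower A L k :
  (forall x, (1 <= sumn (fun j => ind A (x + Z.of_nat (j * k))%Z) L)%nat) ->
  forall a M, (M <= L * cnt A a M + L * (L * k))%nat.
Proof. intros H a M.
  assert (H1 : (M <= sumn (fun j => cnt A (a + Z.of_nat (j * k))%Z M) L)%nat).
  { rewrite exch_cnt. rewrite <- (Nat.mul_1_r M) at 1. rewrite <- sumn_const.
    apply sumn_mono; intros; apply H. }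
  assert (H2 : (sumn (fun j => cnt A (a + Z.of_nat (j * k))%Z M) L <= sumn (fun j => cnt A a M + L * k) L)%nat).
  { apply sumn_mono; intros. pose proof (shift2 A a M (i * k)).
    assert (i * k <= L * k)%nat by nia. lia. }
  rewrite sumn_plus, !sumn_const in H2. lia. Qed.

Lemma count_window_cnt A N : count_window A N = cnt A (- Z.of_nat N)%Z (2 * N + 1).
Proof. unfold count_window, cnt. generalize (2 * N + 1)%nat as n. induction n.
  reflexivity. rewrite seq_S, map_app.
  change (fold_right Init.Nat.add 0%nat (?l)) with (list_sum l).
  rewrite list_sum_app. simpl. change (fold_right Init.Nat.add 0%nat (?l)) with (list_sum l) in IHn.
  rewrite IHn, Nat.add_0_r. f_equal. f_equal. lia. Qed.

Lemma indep_ap k l A : independent (dist_set k l) A ->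
  forall x n, (n <= l + 1)%nat -> (sumn (fun j => ind A (x + Z.of_nat (j * k))%Z) n <= 1)%nat.
Proof. intros HA x n. induction n; simpl; intros Hn. lia.
  specialize (IHn ltac:(lia)).
  destruct (excluded_middle_informative (A (x + Z.of_nat (n * k))%Z)) as [Hx|Hx].
  - rewrite (ind_A _ _ Hx).
    assert (sumn (fun j => ind A (x + Z.of_nat (j * k))%Z) n = 0%nat).
    { rewrite <- (Nat.mul_0_r n). rewrite <- sumn_const. apply sumn_ext. intros i Hi.
      apply ind_0. intros Hi'. apply (HA _ _ Hx Hi'). right. apply in_map_iff.
      exists (n - i)%nat. split. rewrite Nat2Z.inj_mul, Nat2Z.inj_mul, Nat2Z.inj_sub by lia. nia.
      apply in_seq. lia. }
    lia.
  - rewrite (ind_0 _ _ Hx). lia. Qed.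

Definition A0 (k l : nat) (x : Z) : Prop :=
  ((x / Z.of_nat k) mod Z.of_nat (l + 1) = (x mod Z.of_nat k) mod 2)%Z.

Lemma A0_noshift k l j m : (2 <= k)%nat -> (2 <= l)%nat -> (1 <= m <= Z.of_nat l)%Z ->
  A0 k l (j + Z.of_nat k * m)%Z -> A0 k l j -> False.
Proof. unfold A0. intros hk hl hm H1 H2.
  rewrite (Z.mul_comm (Z.of_nat k) m), Z.div_add, Z_mod_plus_full in H1 by lia.
  set (q := (j / Z.of_nat k)%Z) in *. set (Lz := Z.of_nat (l + 1)) in *.
  assert (HL : Lz = (Z.of_nat l + 1)%Z) by (unfold Lz; lia).
  pose proof (Z.div_mod q Lz ltac:(lia)). pose proof (Z.div_mod (q + m) Lz ltac:(lia)).
  set (s0 := (q / Lz)%Z) in *. set (s1 := ((q + m) / Lz)%Z) in *.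
  assert (Lz * (s1 - s0) = m)%Z by lia.
  destruct (Z.le_gt_cases (s1 - s0) 0); nia. Qed.

Lemma A0_noone k l j : (2 <= k)%nat -> (2 <= l)%nat ->
  A0 k l (j + 1)%Z -> A0 k l j -> False.
Proof. unfold A0. intros hk hl H1 H2.
  set (kz := Z.of_nat k) in *. set (Lz := Z.of_nat (l + 1)) in *.
  assert (HL : (Lz >= 3)%Z) by (unfold Lz; lia).
  assert (Hk : (kz >= 2)%Z) by (unfold kz; lia).
  pose proof (Z.div_mod j kz ltac:(lia)). pose proof (Z.div_mod (j + 1) kz ltac:(lia)).
  pose proof (Z.mod_pos_bound j kz ltac:(lia)). pose proof (Z.mod_pos_bound (j+1) kz ltac:(lia)).
  set (q := (j / kz)%Z) in *. set (q1 := ((j + 1) / kz)%Z) in *.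
  set (r := (j mod kz)%Z) in *. set (r1 := ((j + 1) mod kz)%Z) in *.
  assert (kz * (q1 - q) = r - r1 + 1)%Z by lia.
  assert (Ht : (q1 - q = 0 \/ q1 - q = 1)%Z).
  { destruct (Z.le_gt_cases (q1 - q) (-1)). nia. destruct (Z.le_gt_cases (q1 - q) 1). lia. nia. }
  destruct Ht as [Ht|Ht].
  - assert (Eq : q1 = q) by lia. assert (Er : r1 = (r + 1)%Z) by lia. rewrite Eq, Er in H1.
    clearbody q r. Z.div_mod_to_equations. lia.
  - assert (Eq : q1 = (q + 1)%Z) by lia. assert (Er : r1 = 0%Z) by nia. rewrite Eq, Er in H1.
    change (0 mod 2)%Z with 0%Z in H1. pose proof (Z.mod_pos_bound r 2 ltac:(lia)) as Hr2.
    pose proof (Z.div_mod q Lz ltac:(lia)) as D0. pose proof (Z.div_mod (q + 1) Lz ltac:(lia)) as D1.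
    set (s0 := (q / Lz)%Z) in *. set (s1 := ((q + 1) / Lz)%Z) in *.
    assert (Es : (Lz * (s1 - s0) = 1 + q mod Lz)%Z) by lia.
    rewrite H2 in Es. destruct (Z.le_gt_cases (s1 - s0) 0); nia. Qed.

Lemma A0_indep k l : (2 <= k)%nat -> (2 <= l)%nat -> independent (dist_set k l) (A0 k l).
Proof. intros hk hl i j Hi Hj Hin. simpl in Hin. destruct Hin as [H|H].
  - destruct (Z.le_gt_cases 0 (i - j)).
    + apply (A0_noone k l j hk hl); auto. replace (j + 1)%Z with i by lia. auto.
    + apply (A0_noone k l i hk hl); auto. replace (i + 1)%Z with j by lia. auto.
  - apply in_map_iff in H. destruct H as [m [Hm Hs]]. apply in_seq in Hs.
    destruct (Z.le_gt_cases 0 (i - j)).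
    + apply (A0_noshift k l j (Z.of_nat m) hk hl ltac:(lia)); auto.
      replace (j + Z.of_nat k * Z.of_nat m)%Z with i by lia. auto.
    + apply (A0_noshift k l i (Z.of_nat m) hk hl ltac:(lia)); auto.
      replace (i + Z.of_nat k * Z.of_nat m)%Z with j by lia. auto. Qed.

Lemma A0_ap k l : (2 <= k)%nat -> (2 <= l)%nat ->
  forall x, (1 <= sumn (fun j => ind (A0 k l) (x + Z.of_nat (j * k))%Z) (l + 1))%nat.
Proof. intros hk hl x.
  set (kz := Z.of_nat k). set (Lz := Z.of_nat (l + 1)).
  set (t := ((x mod kz) mod 2)%Z). set (q := (x / kz)%Z).
  set (jz := ((t - q) mod Lz)%Z).
  pose proof (Z.mod_pos_bound (t - q) Lz ltac:(unfold Lz; lia)).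
  assert (Z.to_nat jz < l + 1)%nat by (fold jz in H; unfold Lz in H; lia).
  eapply Nat.le_trans; [| apply (sumn_ge _ _ _ H0)].
  cbv beta. rewrite ind_A; auto. unfold A0. fold kz. fold Lz.
  rewrite Nat2Z.inj_mul, Z2Nat.id by lia. fold kz.
  rewrite Z.div_add, Z_mod_plus_full by (unfold kz; lia). fold q. fold t.
  unfold jz. rewrite Z.add_mod_idemp_r by (unfold Lz; lia).
  replace (q + (t - q))%Z with t by lia. apply Z.mod_small.
  pose proof (Z.mod_pos_bound (x mod kz) 2 ltac:(lia)). unfold t, Lz. lia. Qed.

Lemma div_upper L M c K : 0 < L -> 0 < M -> L * c <= M + L * K -> c / M <= 1 / L + K / M.
Proof. intros. replace (1 / L + K / M) with ((M + L * K) / (L * M)) by (field; lra).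
  replace (c / M) with ((L * c) / (L * M)) by (field; lra).
  unfold Rdiv. apply Rmult_le_compat_r; auto. left. apply Rinv_0_lt_compat. nra. Qed.

Lemma div_lower L M c K : 0 < L -> 0 < M -> M <= L * c + L * K -> 1 / L - K / M <= c / M.
Proof. intros. replace (1 / L - K / M) with ((M - L * K) / (L * M)) by (field; lra).
  replace (c / M) with ((L * c) / (L * M)) by (field; lra).
  unfold Rdiv. apply Rmult_le_compat_r. left. apply Rinv_0_lt_compat. nra. lra. Qed.

Lemma tail_lem K (eps : R) : 0 < eps -> 0 <= K -> forall N, exists n, (N <= n)%nat /\
  forall m, (n <= m)%nat -> K / INR (2 * m + 1) < eps.
Proof. intros He HK N. destruct (archimed (K / eps)) as [Hu _].
  assert (0 <= K / eps) by (apply Rdiv_le_0_compat; lra).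
  exists (Nat.max N (Z.to_nat (up (K / eps)))). split. lia. intros m Hm.
  assert (INR (Z.to_nat (up (K / eps))) <= INR m) by (apply le_INR; lia).
  rewrite INR_IZR_INZ, Z2Nat.id in H0.
  2:{ apply le_IZR. simpl. lra. }
  assert (INR m < INR (2 * m + 1)) by (apply lt_INR; lia).
  assert (0 < INR (2 * m + 1)) by (apply lt_0_INR; lia).
  apply (Rmult_lt_reg_r (INR (2 * m + 1))); auto. unfold Rdiv. rewrite Rmult_assoc, Rinv_l by lra.
  rewrite Rmult_1_r. assert (K / eps < INR (2 * m + 1)) by lra.
  apply (Rmult_lt_compat_r eps) in H3; auto. unfold Rdiv in H3.
  rewrite Rmult_assoc, Rinv_l, Rmult_1_r in H3 by lra. lra. Qed.

Definition useq A N := INR (count_window A N) / INR (2 * N + 1).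

Lemma useq_upper k l A : independent (dist_set k l) A -> forall N,
  useq A N <= 1 / INR (l + 1) + INR ((l + 1) * k) / INR (2 * N + 1).
Proof. intros HA N. unfold useq. rewrite count_window_cnt. apply div_upper.
  apply lt_0_INR; lia. apply lt_0_INR; lia.
  pose proof (cnt_upper A (l + 1) k (fun x => indep_ap k l A HA x (l+1) (le_n _)) (- Z.of_nat N)%Z (2 * N + 1)).
  rewrite <- !mult_INR, <- plus_INR. apply le_INR. exact H. Qed.

Lemma useq_lower k l : (2 <= k)%nat -> (2 <= l)%nat -> forall N,
  1 / INR (l + 1) - INR ((l + 1) * k) / INR (2 * N + 1) <= useq (A0 k l) N.
Proof. intros hk hl N. unfold useq. rewrite count_window_cnt. apply div_lower.
  apply lt_0_INR; lia. apply lt_0_INR; lia.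
  pose proof (cnt_lower (A0 k l) (l + 1) k (A0_ap k l hk hl) (- Z.of_nat N)%Z (2 * N + 1)).
  rewrite <- !mult_INR, <- plus_INR. apply le_INR. exact H. Qed.

Theorem corollary20 (k l : nat) (hk : (2 <= k)%nat) (hl : (2 <= l)%nat) :
  indep_ratio (dist_set k l) = Finite (1 / INR (l + 1)).
Proof.
  set (K := INR ((l + 1) * k)).
  assert (HK : 0 <= K) by apply pos_INR.
  apply is_lub_Rbar_unique. split.
  - intros x [A [HA HD]]. simpl. unfold density in HD.
    destruct (ex_LimSup_seq (fun N => INR (count_window A N) / INR (2 * N + 1))) as [l' Hl].
    rewrite (is_LimSup_seq_unique _ _ Hl) in HD. subst l'.
    destruct (Rle_lt_dec x (1 / INR (l + 1))) as [Hx|Hx]; auto. exfalso.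
    assert (He : 0 < (x - 1 / INR (l + 1)) / 2) by lra.
    destruct (tail_lem K _ He HK 0%nat) as [n0 [_ Hn0]].
    destruct (Hl (mkposreal _ He)) as [Hl1 _]. destruct (Hl1 n0) as [m [Hm Hxm]].
    cbn [pos] in Hxm. pose proof (useq_upper k l A HA m). unfold useq in H. fold K in H.
    specialize (Hn0 m Hm). lra.
  - intros b Hb. apply Hb. exists (A0 k l). split. apply A0_indep; auto.
    apply is_LimSup_seq_unique. intros eps. split.
    + intros N. destruct (tail_lem K eps (cond_pos eps) HK N) as [n [Hn Hn']].
      exists n. split; auto. pose proof (useq_lower k l hk hl n). unfold useq in H. fold K in H.
      specialize (Hn' n (le_n _)). lra.
    + destruct (tail_lem K eps (cond_pos eps) HK 0%nat) as [n [_ Hn']].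
      exists n. intros m Hm. pose proof (useq_upper k l _ (A0_indep k l hk hl) m).
      unfold useq in H. fold K in H. specialize (Hn' m Hm). lra.
Qed.
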